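(* Let $I$ be a set of players, for each $i\in I$ let $G_i$ be a compact convex subset of a Hausdorff locally convex topological vector space, and let $G=(G_i,P_i,Q_i)_{i\in I}$ be a general qualitative game satisfying property $T$, where $P_i,Q_i:\prod_{j\in I}G_j\to 2^{G_i}$ satisfy for each $i\in I$: (i) $y_i\in Q_i(y_i,x_{-i})$ for each $y_i\in G_i$ and each $x_{-i}\in G_{-i}$; (ii) $Q_i$ has convex closed values; (iii) $P_i$ has convex values; (iv) $x_i\notin P_i(x)$ for each $x\in\prod_{j\in I}G_j$; (v) $P_i^{-1}(y_i)=\{x\in\prod_{j\in I}G_j: y_i\in P_i(x)\}$ is open in $\prod_{j\in I}G_j$ for each $y_i\in G_i$. Then: (a) if $G\to^* H$ and there exist $i\in I$ and $x_i,y_i\in G_i$ with $y_i\succ_H x_i$, then there exists $x_i^*\in H_i$ such that $x_i^*\succ_H x_i$ and $z_i\not\succ_H x_i^*$ for all $z_i\in G_i$; (b) if $M$ is a nonempty maximal $(\to^* )$-reduction of $G$, then $M$ is the unique maximal $(\to^* )$-reduction of $G$.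
   Context: $I$ is a nonempty set; $X=\prod_{j\in I}G_j$, $G_{-i}=\prod_{j\ne i}G_j$, $x=(x_i,x_{-i})$. A general qualitative game is $G=(G_i,P_i,Q_i)_{i\in I}$ with correspondences $P_i,Q_i:X\to 2^{G_i}$. It satisfies property $T$ if for each $i$ and each $x\in X$: $P_i(x)\subseteq Q_i(x)$, and $y_i\in P_i(x)$ implies $Q_i(y_i,x_{-i})\subseteq P_i(x)$. A pairing of $G$ is a family $H=(H_i)_{i\in I}$ with $H_i\subseteq G_i$ (the $P_i$ restricted to $\prod_jH_j$); $H_{-i}=\prod_{j\ne i}H_j$; $H$ is nonempty if every $H_i\neq\emptyset$. For $x_i,y_i\in G_i$: $y_i\succ_H x_i$ iff $H_{-i}\neq\emptyset$ and $y_i\in P_i(x_i,x_{-i})$ for all $x_{-i}\in H_{-i}$. For pairings $R,S$ with $S_i\subseteq R_i$ for all $i$: $R\to S$ means for every $i$ and $x_i\in R_i\setminus S_i$, $\bigcap_{x_{-i}\in R_{-i}}P_i(x_i,x_{-i})\ne\emptyset$; it is fast if moreover for every $i$ and $x_i\in R_i$, $\bigcap_{x_{-i}\in R_{-i}}P_i(x_i,x_{-i})\neq\emptyset$ implies $x_i\notin S_i$. $G\to^*H$ means there is a finite or countably infinite sequence of pairings $R^0=G,R^1,\dots$ with $R^t\to R^{t+1}$ fast for each $t$ and $H_i=\bigcap_tR^t_i$ for each $i$. $H$ is a maximal $(\to^* )$-reduction of $G$ if $G\to^*H$ and, for pairings $H'$ with $H'_i\subseteq H_i$, $H\to H'$ holds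 only for $H'=H$. *)

(* Defs.v *)
From HB Require Import structures.
From mathcomp Require Import all_boot all_order all_algebra.
From mathcomp Require Import all_classical all_reals all_analysis.
Unset Printing Implicit Defensive.
Local Open Scope classical_set_scope.

Section GameDefs.
Context {R : realType} {I : Type} {E : I -> tvsType R}.

Definition upd (x : forall j, E j) (i : I) (y : E i) : forall j, E j :=
  fun j => match pselect (i = j) with
           | left e => eq_rect i E y j e
           | right _ => x j
           end.

Definition inX (G : forall i, set (E i)) (x : forall j, E j) : Prop :=
  forall j, G j (x j).

(* the coordinates of x other than i lie in H_{-i} = prod_{j<>i} H_j
   (the i-th coordinate of x is irrelevant) *)
Definition minus_in (H : forall i, set (E i)) (i : I) (x : forall j, E j) : Prop :=
  forall j, j <> i -> H j (x j).

Definition succH (P : forall i, (forall j, E j) -> set (E i))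
  (H : forall i, set (E i)) (i : I) (yi xi : E i) : Prop :=
  (exists x, minus_in H i x) /\
  (forall x, minus_in H i x -> P i (upd x i xi) yi).

(* \bigcap_{x_{-i} in R_{-i}} P_i(x_i, x_{-i}) <> empty
   (the intersection is taken inside G_i, so it is G_i when R_{-i} is empty) *)
Definition inter_nonempty (G : forall i, set (E i))
  (P : forall i, (forall j, E j) -> set (E i))
  (Rr : forall i, set (E i)) (i : I) (xi : E i) : Prop :=
  exists y, G i y /\ (forall x, minus_in Rr i x -> P i (upd x i xi) y).

Definition reduces G P (Rr S : forall i, set (E i)) : Prop :=
  (forall i, S i `<=` Rr i) /\
  (forall i xi, Rr i xi -> ~ S i xi -> inter_nonempty G P Rr i xi).

Definition fast_reduces G P (Rr S : forall i, set (E i)) : Prop :=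
  reduces G P Rr S /\
  (forall i xi, Rr i xi -> inter_nonempty G P Rr i xi -> ~ S i xi).

(* index t belongs to the sequence R^0, ..., R^n (Some n) or R^0, R^1, ... (None) *)
Definition in_range (N : option nat) (t : nat) : Prop :=
  if N is Some n then (t <= n)%N else True.

Definition reduces_star G P (H : forall i, set (E i)) : Prop :=
  exists (Rs : nat -> forall i, set (E i)) (N : option nat),
    (forall i, Rs 0%N i = G i) /\
    (forall t, in_range N t.+1 -> fast_reduces G P (Rs t) (Rs t.+1)) /\
    (forall i, H i = [set y | forall t, in_range N t -> Rs t i y]).

Definition max_reduction G P (H : forall i, set (E i)) : Prop :=
  reduces_star G P H /\
  (forall H' : forall i, set (E i),
     (forall i, H' i `<=` H i) -> reduces G P H H' -> forall i, H' i = H i).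

Definition nonempty_pairing (H : forall i, set (E i)) : Prop :=
  forall i, H i !=set0.

Definition propertyT G (P Q : forall i, (forall j, E j) -> set (E i)) : Prop :=
  forall i x, inX G x ->
    P i x `<=` Q i x /\
    (forall yi, P i x yi -> Q i (upd x i yi) `<=` P i x).

End GameDefs.

(* Main.v *)
Require Import Defs.
From HB Require Import structures.
From mathcomp Require Import all_boot all_order all_algebra.
From mathcomp Require Import all_classical all_reals all_analysis.
Local Open Scope classical_set_scope.

Lemma upd_same (R : realType) (I : Type) (E : I -> tvsType R)
  (x : forall j, E j) i (y : E i) : upd x i y i = y.
Proof.
rewrite /upd; case: pselect => [e|//].
by rewrite (Prop_irrelevance e erefl).
Qed.

Lemma upd_upd (R : realType) (I : Type) (E : I -> tvsType R)
  (x : forall j, E j) i (a b : E i) : upd (upd x i a) i b = upd x i b.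
Proof.
apply: functional_extensionality_dep => j; rewrite /upd.
by case: pselect.
Qed.

Lemma upd_inX (R : realType) (I : Type) (E : I -> tvsType R)
  (G : forall i, set (E i)) (x : forall j, E j) i (y : E i) :
  minus_in G i x -> G i y -> inX G (upd x i y).
Proof.
move=> mx Gy j; rewrite /upd; case: pselect => [e|ne].
  by case: j / e.
by apply: mx => e; apply: ne.
Qed.
Arguments upd_inX {R I E G x i y}.

Theorem corollary3 (R : realType) (I : Type) (E : I -> tvsType R)
  (G : forall i, set (E i)) (P Q : forall i, (forall j, E j) -> set (E i)) :
  inhabited I ->
  (forall i, hausdorff_space (E i)) ->
  (forall i, compact (G i)) ->
  (forall i, @convex_set R (E i) (G i)) ->
  (* P_i, Q_i : X -> 2^{G_i} *)
  (forall i x, inX G x -> P i x `<=` G i) ->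
  (forall i x, inX G x -> Q i x `<=` G i) ->
  propertyT G P Q ->
  (* (i) *)
  (forall i x yi, minus_in G i x -> G i yi -> Q i (upd x i yi) yi) ->
  (* (ii) *)
  (forall i x, inX G x -> @convex_set R (E i) (Q i x) /\ closed (Q i x)) ->
  (* (iii) *)
  (forall i x, inX G x -> @convex_set R (E i) (P i x)) ->
  (* (iv) *)
  (forall i x, inX G x -> ~ P i x (x i)) ->
  (* (v) : P_i^{-1}(y_i) is open in X (subspace topology of the product) *)
  (forall i yi, G i yi ->
     exists2 U : set (prod_topology (fun j => (E j : topologicalType))), open U &
       inX G `&` U = [set x | inX G x /\ P i x yi]) ->
  (* (a) *)
  (forall H : forall i, set (E i), reduces_star G P H ->
     forall i xi yi, G i xi -> G i yi -> succH P H i yi xi ->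
     exists xs, H i xs /\ succH P H i xs xi /\
       (forall zi, G i zi -> ~ succH P H i zi xs)) /\
  (* (b) *)
  (forall M : forall i, set (E i), nonempty_pairing M -> max_reduction G P M ->
     forall M' : forall i, set (E i), max_reduction G P M' ->
       forall i, M' i = M i).
Proof.
move=> inh haus comp conv PG QG PT Qi QCc Pc Pirr Popen.
have inr0 : forall N, in_range N 0 by case.
have inrS : forall N t, in_range N t.+1 -> in_range N t.
  by move=> [n|] t //= /ltnW.
split; last first.
  have key : forall S Hx, max_reduction G P S -> reduces_star G P Hx ->
      forall k, S k `<=` Hx k.
    move=> S Hx [[Rs0 [N0 [R00 [_ HS]]]] Smax] [Rs [N [R0 [Rf HE]]]].
    have SG : forall k w, S k w -> G k w.
      by move=> k w; rewrite HS /= => /(_ 0%N (inr0 _)); rewrite R00.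
    have stab : forall j z, S j z -> ~ inter_nonempty G P S j z.
      move=> j z Sz ine.
      pose S' := fun k => [set w : E k | S k w /\
                   ~ (exists e : j = k, w = eq_rect j E z k e)].
      have red' : (forall k w, S k w -> ~ S' k w -> inter_nonempty G P S k w).
        move=> k w Sw nS'; have : exists e : j = k, w = eq_rect j E z k e.
          by apply: contrapT => ne; apply: nS'; split.
        by case=> e ->; case: k / e {Sw nS' w}.
      have sub : forall k, S' k `<=` S k by move=> k w [].
      have eqS := Smax S' sub (conj sub red') j.
      have : S' j z by rewrite eqS.
      by case=> _; apply; exists erefl.
    have ind : forall t, in_range N t -> forall k w, S k w -> Rs t k w.
      elim=> [|t IH] Ht k w Sw; first by rewrite R0; apply: SG.
      have [[_ red] _] := Rf t Ht.
      apply: contrapT => nR.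
      have [y [Gy hy]] := red k w (IH (inrS _ _ Ht) k w Sw) nR.
      apply: (stab k w Sw); exists y; split => // x' mx'.
      apply: hy => j' nj'; exact: (IH (inrS _ _ Ht) _ _ (mx' j' nj')).
    move=> k w Sw; rewrite HE => t Ht; exact: ind.
  move=> M _ HM M' HM' i; apply/seteqP; split.
    by apply: key => //; case: HM.
  by apply: key => //; case: HM'.
move=> H [Rs [N [R0 [Rf HE]]]] i xi yi Gxi Gyi [Hne Hyx].
have HG : forall j z, H j z -> G j z.
  by move=> j z; rewrite HE /= => /(_ 0%N (inr0 _)); rewrite R0.
have mHG : forall x, minus_in H i x -> minus_in G i x.
  by move=> x mx j nj; apply: HG; apply: mx.
pose sb (y x : E i) := forall x', minus_in H i x' -> P i (upd x' i x) y.
pose C (y : E i) := [set z | forall x', minus_in H i x' -> Q i (upd x' i y) z].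
have [x0 mx0] := Hne.
have SC : forall b z, G i b -> sb z b -> C b z.
  move=> b z Gb hz x' mx'.
  have [+ _] := PT i _ (upd_inX (mHG _ mx') Gb); apply; exact: hz.
have CS : forall a b z, G i a -> G i b -> sb b a -> C b z -> sb z a.
  move=> a b z Ga Gb hba hz x' mx'.
  have [_ +] := PT i _ (upd_inX (mHG _ mx') Ga).
  move=> /(_ b (hba _ mx')); rewrite upd_upd; apply; exact: hz.
have sbG : forall a z, G i a -> sb z a -> G i z.
  move=> a z Ga hz; exact: (PG i _ (upd_inX (mHG _ mx0) Ga) _ (hz _ mx0)).
have tr : forall a b c, G i a -> G i b -> sb c b -> sb b a -> sb c a.
  move=> a b c Ga Gb hcb hba; apply: (CS a b) => //; exact: SC.
have irr : forall a, G i a -> ~ sb a a.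
  move=> a Ga h; apply: (Pirr i _ (upd_inX (mHG _ mx0) Ga)).
  by rewrite upd_same; apply: h.
have Cy : forall y, G i y -> C y y.
  by move=> y Gy x' mx'; apply: Qi => //; apply: mHG.
have CG : forall y, G i y -> C y `<=` G i.
  move=> y Gy z hz; exact: (QG i _ (upd_inX (mHG _ mx0) Gy) _ (hz _ mx0)).
suff [xs [Gxs [hxs mxs]]] : exists xs, G i xs /\ sb xs xi /\
    (forall z, G i z -> ~ sb z xs).
  exists xs; split; last first.
    by split; [split|move=> z Gz [_ hz]; apply: (mxs z Gz)].
  rewrite HE => t; elim: t => [|t IH] Ht; first by rewrite R0.
  have [[_ red] _] := Rf t Ht.
  apply: contrapT => nR.
  have [y [Gy hy]] := red i xs (IH (inrS _ _ Ht)) nR.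
  apply: (mxs y Gy) => x' mx'; apply: hy => j nj.
  by move: (mx' j nj); rewrite HE => /(_ t (inrS _ _ Ht)).
pose T := {y : E i | G i y /\ sb y xi}.
pose Rl : rel T := fun s t => `[< proj1_sig s = proj1_sig t \/
   sb (proj1_sig t) (proj1_sig s) >].
have t0 : T := exist _ yi (conj Gyi Hyx).
have [||| t tmax] := @ZL_preorder T t0 Rl.
- by move=> s; apply/asboolP; left.
- move=> [r [Gr hr]] [s [Gs hs]] [u [Gu hu]] /asboolP /= h1 /asboolP /= h2.
  apply/asboolP => /=; case: h1 => [->//|h1]; case: h2 => [<-|h2]; first by right.
  by right; apply: (tr r s u).
- move=> A Atot.
  case: (pselect (exists a, A a)) => [[a Aa]|nA]; last first.
    by exists t0 => s As; exfalso; apply: nA; exists s.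
  case: (pselect (exists m, A m /\ forall s, A s -> Rl s m)) => [[m [Am Hm]]|nM].
    by exists m.
  have up : forall s, A s -> exists s', A s' /\ sb (proj1_sig s') (proj1_sig s).
    move=> s As; apply: contrapT => nup; apply: nM; exists s; split=> // s' As'.
    case: (Atot s' s As' As) => // /asboolP [e|h].
      by apply/asboolP; left.
    by exfalso; apply: nup; exists s'.
  pose F := filter_from A (fun s : T => C (proj1_sig s)).
  have FF : Filter F.
    apply: filter_from_filter; first by exists a.
    move=> s1 s2 A1 A2; case: (Atot s1 s2 A1 A2) => [/asboolP [e|h]|/asboolP [e|h]].
    + by exists s2 => // z hz; split=> //; rewrite e.
    + exists s2 => // z hz; split=> //.
      apply: SC (proj1 (proj2_sig s1)) _.
      exact: (CS _ _ _ (proj1 (proj2_sig s1)) (proj1 (proj2_sig s2)) h hz).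
    + by exists s1 => // z hz; split=> //; rewrite e.
    + exists s1 => // z hz; split=> //.
      apply: SC (proj1 (proj2_sig s2)) _.
      exact: (CS _ _ _ (proj1 (proj2_sig s2)) (proj1 (proj2_sig s1)) h hz).
  have PF : ProperFilter F.
    apply: filter_from_proper => s _; exists (proj1_sig s).
    exact: (Cy _ (proj1 (proj2_sig s))).
  have FG : F (G i) by exists a => //; exact: (CG _ (proj1 (proj2_sig a))).
  have [p [Gp clp]] := comp i F PF FG.
  have pC : forall s, A s -> C (proj1_sig s) p.
    move=> s As.
    have cl : closure (C (proj1_sig s)) p.
      by move=> B nB; apply: clp => //; exists s.
    move=> x' mx'.
    have Gs : G i (proj1_sig s) := proj1 (proj2_sig s).
    apply: (QCc i _ (upd_inX (mHG _ mx') Gs)).2.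
    by apply: (closureS _ cl) => z hz; apply: hz.
  have sbp : forall s, A s -> sb p (proj1_sig s).
    move=> s As; have [s' [As' hs']] := up s As.
    exact: (CS _ _ _ (proj1 (proj2_sig s)) (proj1 (proj2_sig s')) hs' (pC s' As')).
  have hpx : sb p xi.
    exact: (tr _ _ _ Gxi (proj1 (proj2_sig a)) (sbp a Aa) (proj2 (proj2_sig a))).
  exists (exist _ p (conj Gp hpx)) => s As; apply/asboolP; right; exact: sbp.
set xs := proj1_sig t; have Gxs : G i xs := proj1 (proj2_sig t).
have hxs : sb xs xi := proj2 (proj2_sig t).
exists xs; split=> //; split=> // z Gz hz.
have hzx : sb z xi by apply: (tr xi xs z).
have /asboolP := tmax (exist _ z (conj Gz hzx)) (asboolT (or_intror hz)).
move=> /= [e|h]; first by apply: (irr xs Gxs); move: hz; rewrite /xs -e.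
by apply: (irr xs Gxs); apply: (tr xs z xs).
Qed.
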